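(* Let $X$ be a shift space over a finite alphabet. If $X$ is balanced, then $X$ is boundedly supermultiplicative.
   Context: For a shift space $X\subseteq\mathcal{A}^{\mathbb{Z}}$ ($\mathcal{A}$ finite), $\mathcal{B}_n(X)$ denotes the set of words of length $n$ appearing in points of $X$, and $\mathcal{B}(X)=\bigcup_{n\ge1}\mathcal{B}_n(X)$. For $\omega\in\mathcal{B}(X)$ and $r\in\mathbb{N}$, $\mathcal{B}_{\omega,r}(X)$ is the set of words $u$ of length $r$ such that $\omega u\in\mathcal{B}(X)$. $X$ is boundedly supermultiplicative (BSM) if there is $K\ge1$ with $|\mathcal{B}_m(X)|\cdot|\mathcal{B}_n(X)|\le K|\mathcal{B}_{m+n}(X)|$ for all $m,n\ge1$. $X$ is balanced if there is $B>0$ such that $|\mathcal{B}_{\omega,r}(X)|/|\mathcal{B}_r(X)|\ge B$ for every $\omega\in\mathcal{B}(X)$ and every $r\in\mathbb{N}$. *)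

(* Defs.v *)
From HB Require Import structures.
From mathcomp Require Import all_boot all_order all_algebra.
From mathcomp Require Import boolp reals.
Set Implicit Arguments. Unset Strict Implicit. Unset Printing Implicit Defensive.
Import Order.TTheory GRing.Theory Num.Theory.

Definition shiftmap (A : Type) (x : int -> A) : int -> A := fun i => x (i + 1)%R.

Definition occurs (A : Type) (w : seq A) (x : int -> A) : Prop :=
  exists i : int, w = [seq x (i + (k%:Z))%R | k <- iota 0 (size w)].

(* X is a shift space: shift-invariant (sigma(X) = X) and closed in the
   product topology (A discrete): a point all of whose central windows occur in
   points of X belongs to X. *)
Definition is_shift_space (A : finType) (X : (int -> A) -> Prop) : Prop :=
  (forall x, X x -> X (shiftmap x)) /\
  (forall y, X y -> exists x, X x /\ shiftmap x = y) /\
  (forall x : int -> A,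
     (forall n : nat,
        exists y, X y /\ forall i : int, (- n%:Z <= i <= n%:Z)%R -> y i = x i) ->
     X x).

Definition inLang (A : Type) (X : (int -> A) -> Prop) (w : seq A) : Prop :=
  exists x, X x /\ occurs w x.

Definition Bn (A : finType) (X : (int -> A) -> Prop) (n : nat) : {set n.-tuple A} :=
  [set w : n.-tuple A | `[< inLang X (tval w) >]].

Definition Bfollow (A : finType) (X : (int -> A) -> Prop) (omega : seq A) (r : nat)
  : {set r.-tuple A} :=
  [set u : r.-tuple A | `[< inLang X (omega ++ tval u) >]].

Local Open Scope ring_scope.

Definition BSM (R : realType) (A : finType) (X : (int -> A) -> Prop) : Prop :=
  exists K : R, 1 <= K /\
    forall m n : nat, (0 < m)%N -> (0 < n)%N ->
      (#|Bn X m| * #|Bn X n|)%:R <= K * (#|Bn X (m + n)|)%:R.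

Definition balanced (R : realType) (A : finType) (X : (int -> A) -> Prop) : Prop :=
  exists B : R, 0 < B /\
    forall (omega : seq A) (r : nat), (0 < size omega)%N -> inLang X omega ->
      (0 < r)%N ->
      (#|Bfollow X omega r|)%:R / (#|Bn X r|)%:R >= B.

(* Main.v *)
Require Import Defs.
From mathcomp Require Import all_boot all_order all_algebra.
From mathcomp Require Import boolp reals.
From mathcomp Require Import ring.
Import Order.TTheory GRing.Theory Num.Theory.

Lemma sum_follow_le (A : finType) (X : (int -> A) -> Prop) (m n : nat) :
  (\sum_(w in Bn X m) #|Bfollow X (tval w) n| <= #|Bn X (m + n)|)%N.
Proof.
pose S := [set p : m.-tuple A * n.-tuple A | (p.1 \in Bn X m) && (p.2 \in Bfollow X (tval p.1) n)].
have -> : (\sum_(w in Bn X m) #|Bfollow X (tval w) n| = #|S|)%N.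
  rewrite -sum1_card.
  rewrite (eq_bigr (fun w => \sum_(u in Bfollow X (tval w) n) 1)%N); last by move=> w _; rewrite sum1_card.
  rewrite (pair_big_dep (fun w => w \in Bn X m) (fun w u => u \in Bfollow X (tval w) n) (fun _ _ => 1%N)).
  by apply: eq_bigl => p; rewrite /S inE.
pose f := fun p : m.-tuple A * n.-tuple A => cat_tuple p.1 p.2.
have finj : injective f.
  move=> [a b] [c d] /(congr1 val) /= H.
  have Hs : size a = size c by rewrite !size_tuple.
  have := eqseq_cat b d Hs; rewrite H eqxx => /esym/andP[/eqP e1 /eqP e2].
  by congr pair; apply: val_inj.
rewrite -(card_imset _ finj); apply: subset_leq_card; apply/subsetP => w.
case/imsetP => [[a b]]; rewrite inE /= => /andP[_ hb] ->.
move: hb; rewrite !inE /f /=. done.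
Qed.

Local Open Scope ring_scope.
Theorem proposition3p6 (R : realType) (A : finType) (X : (int -> A) -> Prop) :
  is_shift_space X -> balanced R X -> BSM R X.
Proof.
move=> _ [B [B0 HB]].
exists (Num.max 1 B^-1); split; first by rewrite le_max lexx.
move=> m n m0 n0.
have K0 : 0 <= Num.max 1 B^-1 by rewrite le_max ler01.
have KB : 1 <= Num.max 1 B^-1 * B.
  by rewrite -(mulVf (lt0r_neq0 B0)) ler_pM2r // le_max lexx orbT.
have [Z|NZ] := eqVneq #|Bn X n| 0%N.
  rewrite Z muln0 mulr0n; apply: mulr_ge0 => //.
have Bn0 : (0 : R) < #|Bn X n|%:R by rewrite ltr0n lt0n.
have Hf : forall w : m.-tuple A, w \in Bn X m ->
    B * #|Bn X n|%:R <= #|Bfollow X (tval w) n|%:R.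
  move=> w; rewrite inE => /asboolP Hw.
  have := HB (tval w) n; rewrite size_tuple => /(_ m0 Hw n0).
  by rewrite ler_pdivlMr.
have H1 : (#|Bn X m|%:R * (B * #|Bn X n|%:R) <= (#|Bn X (m + n)|)%:R :> R).
  apply: (@le_trans _ _ ((\sum_(w in Bn X m) #|Bfollow X (tval w) n|)%N%:R)); last by rewrite ler_nat; apply: sum_follow_le.
  rewrite natr_sum -sum1_card natr_sum mulr_suml.
  by apply: ler_sum => w Hw; rewrite mul1r; apply: Hf.
apply: le_trans; last by apply: ler_wpM2l; [exact: K0| exact: H1].
rewrite natrM.
have -> : Num.max 1 B^-1 * (#|Bn X m|%:R * (B * #|Bn X n|%:R)) =
   (#|Bn X m|%:R * #|Bn X n|%:R) * (Num.max 1 B^-1 * B) :> R by ring.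
rewrite -[X in X <= _]mulr1 ler_wpM2l //.
by apply: mulr_ge0; apply: ler0n.
Qed.
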